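(* A state-morphism BL-algebra $(\mathbf M,\tau)$ is subdirectly irreducible if and only if one of the following three possibilities holds. (i) $\mathbf M$ is linearly ordered, $\tau$ is the identity on $M$, and $\mathbf M$ is a subdirectly irreducible BL-algebra. (ii) $\tau$ is not faithful, $\mathbf M$ has no nontrivial Boolean elements (i.e. $B(\mathbf M)=\{0,1\}$), $\mathbf M$ is a local BL-algebra, $\mathrm{Ker}(\tau)$ is a subdirectly irreducible hoop, and $\mathrm{Ker}(\tau)$ and $\tau(M)$ have the disjunction property. Moreover, in this case: $\mathbf M$ is linearly ordered if and only if $\mathrm{Rad}_1(\mathbf M)$ is linearly ordered, and then $\mathbf M$ is a subdirectly irreducible BL-algebra such that the smallest nontrivial $\tau$-filter of $(\mathbf M,\tau)$ is the smallest nontrivial filter of $\mathbf M$; and if $\mathrm{Rad}_1(\mathbf M)=\mathrm{Ker}(\tau)$, then $\mathbf M$ is linearly ordered. (iii) $\tau$ is not faithful, $\mathbf M$ has a nontrivial Boolean element, and there are a linearly ordered BL-algebra $\mathbf A$, a subdirectly irreducible BL-algebra $\mathbf B$ and an injective BL-homomorphism $h:\mathbf A\to\mathbf B$ such that $(\mathbf M,\tau)$ is isomorphic, as a state-morphism BL-algebra, to $(\mathbf A\times\mathbf B,\tau_h)$, where $\tau_h(x,y)=(x,h(x))$ for $(x,y)\in A\times B$.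
   Context: A BL-algebra is an algebra $\mathbf M=(M;\wedge,\vee,\odot,\to,0,1)$ of type $\langle 2,2,2,2,0,0\rangle$ such that $(M;\wedge,\vee,0,1)$ is a bounded lattice, $(M;\odot,1)$ is a commutative monoid, and for all $a,b,c$: $c\le a\to b$ iff $a\odot c\le b$; $a\wedge b=a\odot(a\to b)$; $(a\to b)\vee(b\to a)=1$. Put $a^-=a\to 0$. A filter is a nonempty subset closed under $\odot$ and upward closed; a maximal filter is a proper filter not strictly contained in another proper filter; $\mathbf M$ is local if it has a unique maximal filter; $\mathrm{Rad}_1(\mathbf M)$ is the intersection of all maximal filters. An element $a$ is Boolean if $a^{--}=a$ and $a\odot a=a$; $B(\mathbf M)$ is the set of Boolean elements, and a Boolean element is nontrivial if it differs from $0,1$. A state-morphism BL-algebra is a pair $(\mathbf M,\tau)$ where $\tau$ is a BL-algebra endomorphism of $\mathbf M$ with $\tau\circ\tau=\tau$, regarded as an algebra with the additional unary operation $\tau$; its congruences correspond to $\tau$-filters (filters $F$ with $\tau(F)\subseteq F$), so it is subdirectly irreducible iff it has a least $\tau$-filter different from $\{1\}$. $\mathrm{Ker}(\tau)=\{a:\tau(a)=1\}$; $\tau$ is faithful if $\mathrm{Ker}(\tau)=\{1\}$. $\mathrm{Ker}(\tau)$ is a hoop under $\odot,\to,1$, subdirectly irreducible if it has a least filter (nonempty, $\odot$-closed, upward closed within $\mathrm{Ker}(\tau)$) different from $\{1\}$. $\mathrm{Ker}(\tau)$ and $\tau(M)$ have the disjunction property if for all $x\in\mathrm{Ker}(\tau)$,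 $y\in\tau(M)$, $x\vee y=1$ implies $x=1$ or $y=1$. *)

(* Defs.v *)
From Stdlib Require Import Classical.

Record BL : Type := MkBL {
  car :> Type;
  bmeet : car -> car -> car;
  bjoin : car -> car -> car;
  bprod : car -> car -> car;
  bimp  : car -> car -> car;
  bzero : car;
  bone  : car;
  meet_comm : forall a b, bmeet a b = bmeet b a;
  meet_assoc : forall a b c, bmeet a (bmeet b c) = bmeet (bmeet a b) c;
  join_comm : forall a b, bjoin a b = bjoin b a;
  join_assoc : forall a b c, bjoin a (bjoin b c) = bjoin (bjoin a b) c;
  meet_absorb : forall a b, bmeet a (bjoin a b) = a;
  join_absorb : forall a b, bjoin a (bmeet a b) = a;
  meet_zero : forall a, bmeet a bzero = bzero;
  join_one : forall a, bjoin a bone = bone;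
  prod_comm : forall a b, bprod a b = bprod b a;
  prod_assoc : forall a b c, bprod a (bprod b c) = bprod (bprod a b) c;
  prod_one : forall a, bprod a bone = a;
  (* residuation: c <= a -> b  iff  a * c <= b, where x <= y := x /\ y = x *)
  residuation : forall a b c,
    bmeet c (bimp a b) = c <-> bmeet (bprod a c) b = bprod a c;
  divisibility : forall a b, bmeet a b = bprod a (bimp a b);
  prelinearity : forall a b, bjoin (bimp a b) (bimp b a) = bone
}.

Arguments bmeet {_}. Arguments bjoin {_}. Arguments bprod {_}. Arguments bimp {_}.
Arguments bzero {_}. Arguments bone {_}.

Section Notions.
Variable M : BL.

Definition ble (x y : M) : Prop := bmeet x y = x.

Definition bneg (a : M) : M := bimp a bzero.

Definition linearly_ordered : Prop := forall x y : M, ble x y \/ ble y x.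

Definition is_filter (F : M -> Prop) : Prop :=
  (exists x, F x) /\
  (forall x y, F x -> F y -> F (bprod x y)) /\
  (forall x y, F x -> ble x y -> F y).

Definition proper_filter (F : M -> Prop) : Prop := is_filter F /\ ~ F bzero.

Definition maximal_filter (F : M -> Prop) : Prop :=
  proper_filter F /\
  forall G, proper_filter G -> (forall x, F x -> G x) -> (forall x, G x -> F x).

Definition is_local : Prop :=
  exists F, maximal_filter F /\
    forall G, maximal_filter G -> forall x, G x <-> F x.

Definition Rad1 (x : M) : Prop := forall F, maximal_filter F -> F x.

Definition Rad1_linearly_ordered : Prop :=
  forall x y, Rad1 x -> Rad1 y -> ble x y \/ ble y x.

(* F differs from {1} (F being a filter, it contains 1) *)
Definition nontrivial_set (F : M -> Prop) : Prop := exists x, F x /\ x <> bone.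

Definition least_nontrivial_filter (F : M -> Prop) : Prop :=
  is_filter F /\ nontrivial_set F /\
  forall G, is_filter G -> nontrivial_set G -> forall x, F x -> G x.

Definition SI_BL : Prop := exists F, least_nontrivial_filter F.

Definition is_boolean (a : M) : Prop := bneg (bneg a) = a /\ bprod a a = a.

Definition no_nontrivial_boolean : Prop :=
  forall a, is_boolean a -> a = bzero \/ a = bone.

Definition has_nontrivial_boolean : Prop :=
  exists a, is_boolean a /\ a <> bzero /\ a <> bone.

End Notions.

Arguments ble {_}. Arguments bneg {_}.

Definition is_BLhom (M N : BL) (f : M -> N) : Prop :=
  (forall a b, f (bmeet a b) = bmeet (f a) (f b)) /\
  (forall a b, f (bjoin a b) = bjoin (f a) (f b)) /\
  (forall a b, f (bprod a b) = bprod (f a) (f b)) /\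
  (forall a b, f (bimp a b) = bimp (f a) (f b)) /\
  f bzero = bzero /\ f bone = bone.

Definition is_state_morphism (M : BL) (tau : M -> M) : Prop :=
  is_BLhom M M tau /\ forall x, tau (tau x) = tau x.

Section StateMorphism.
Variables (M : BL) (tau : M -> M).

Definition is_tau_filter (F : M -> Prop) : Prop :=
  is_filter M F /\ forall x, F x -> F (tau x).

Definition least_nontrivial_tau_filter (F : M -> Prop) : Prop :=
  is_tau_filter F /\ nontrivial_set M F /\
  forall G, is_tau_filter G -> nontrivial_set M G -> forall x, F x -> G x.

Definition SI_SM : Prop := exists F, least_nontrivial_tau_filter F.

Definition Ker (a : M) : Prop := tau a = bone.

Definition faithful : Prop := forall a, Ker a -> a = bone.

Definition is_identity : Prop := forall a, tau a = a.

(* filters of the hoop Ker(tau) (nonempty, product-closed, upward closed in Ker) *)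
Definition is_Ker_filter (G : M -> Prop) : Prop :=
  (forall x, G x -> Ker x) /\
  (exists x, G x) /\
  (forall x y, G x -> G y -> G (bprod x y)) /\
  (forall x y, G x -> Ker y -> ble x y -> G y).

Definition Ker_SI : Prop :=
  exists G, is_Ker_filter G /\ nontrivial_set M G /\
    forall H, is_Ker_filter H -> nontrivial_set M H -> forall x, G x -> H x.

Definition disjunction_property : Prop :=
  forall x y, Ker x -> (exists z, y = tau z) -> bjoin x y = bone ->
    x = bone \/ y = bone.

End StateMorphism.

Lemma pair_eq_iff (X Y : Type) (a c : X) (b d : Y) :
  (a, b) = (c, d) <-> a = c /\ b = d.
Proof. split; [intros H; inversion H; auto | intros [-> ->]; reflexivity]. Qed.

Definition prodBL (A B : BL) : BL.
Proof.
  refine (MkBL (A * B)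
    (fun x y => (bmeet (fst x) (fst y), bmeet (snd x) (snd y)))
    (fun x y => (bjoin (fst x) (fst y), bjoin (snd x) (snd y)))
    (fun x y => (bprod (fst x) (fst y), bprod (snd x) (snd y)))
    (fun x y => (bimp (fst x) (fst y), bimp (snd x) (snd y)))
    (bzero, bzero) (bone, bone) _ _ _ _ _ _ _ _ _ _ _ _ _ _);
  repeat intros [? ?]; simpl;
  try (f_equal; first [apply meet_comm | apply meet_assoc | apply join_comm
        | apply join_assoc | apply meet_absorb | apply join_absorb
        | apply meet_zero | apply join_one | apply prod_comm | apply prod_assoc
        | apply prod_one | apply divisibility | apply prelinearity]).
  rewrite !pair_eq_iff, !residuation; tauto.
Defined.

Definition tau_h (A B : BL) (h : A -> B) (p : prodBL A B) : prodBL A B :=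
  (fst p, h (fst p)).

(* Main.v *)
Require Import Defs.
From Stdlib Require Import Classical ProofIrrelevance Arith Lia.

Section Basic.
Variable M : BL.
Implicit Types x y z a b c d e : M.

Lemma meet_idem x : bmeet x x = x.
Proof. pose proof (meet_absorb M x (bmeet x x)) as H. rewrite join_absorb in H. exact H. Qed.

Lemma join_idem x : bjoin x x = x.
Proof. pose proof (join_absorb M x (bjoin x x)) as H. rewrite meet_absorb in H. exact H. Qed.

Lemma le_refl x : ble x x.
Proof. apply meet_idem. Qed.

Lemma le_trans x y z : ble x y -> ble y z -> ble x z.
Proof. unfold ble; intros H1 H2. rewrite <- H1, <- meet_assoc, H2. reflexivity. Qed.

Lemma le_antisym x y : ble x y -> ble y x -> x = y.
Proof. unfold ble; intros H1 H2. rewrite <- H1. rewrite meet_comm. exact H2. Qed.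

Lemma meet_le_l x y : ble (bmeet x y) x.
Proof. unfold ble. rewrite (meet_comm _ x y), <- meet_assoc, meet_idem. reflexivity. Qed.

Lemma meet_le_r x y : ble (bmeet x y) y.
Proof. unfold ble. rewrite <- meet_assoc, meet_idem. reflexivity. Qed.

Lemma le_meet x y z : ble z x -> ble z y -> ble z (bmeet x y).
Proof. unfold ble; intros H1 H2. rewrite meet_assoc, H1, H2. reflexivity. Qed.

Lemma le_join_iff x y : ble x y <-> bjoin x y = y.
Proof.
  unfold ble; split; intro H.
  - rewrite <- H, join_comm, meet_comm. apply join_absorb.
  - rewrite <- H. apply meet_absorb.
Qed.

Lemma join_le_l x y : ble x (bjoin x y).
Proof. apply meet_absorb. Qed.

Lemma join_le_r x y : ble y (bjoin x y).
Proof. rewrite join_comm. apply meet_absorb. Qed.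

Lemma join_lub x y z : ble x z -> ble y z -> ble (bjoin x y) z.
Proof.
  rewrite !le_join_iff; intros H1 H2. rewrite <- join_assoc, H2, H1. reflexivity.
Qed.

Lemma le_zero x : ble bzero x.
Proof. unfold ble. rewrite meet_comm. apply meet_zero. Qed.

Lemma le_one x : ble x bone.
Proof. apply le_join_iff. apply join_one. Qed.

Lemma one_le x : ble bone x -> x = bone.
Proof. intro H. apply le_antisym; auto using le_one. Qed.

Lemma le_zero_eq x : ble x bzero -> x = bzero.
Proof. intro H. apply le_antisym; auto using le_zero. Qed.

Lemma meet_one x : bmeet x bone = x.
Proof. apply le_one. Qed.

Lemma join_zero x : bjoin x bzero = x.
Proof. rewrite join_comm. apply le_join_iff. apply le_zero. Qed.

Lemma join_one_l x : bjoin bone x = bone.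
Proof. rewrite join_comm. apply join_one. Qed.

Lemma join_mono x y x' y' : ble x x' -> ble y y' -> ble (bjoin x y) (bjoin x' y').
Proof.
  intros. apply join_lub.
  - eapply le_trans; [eassumption| apply join_le_l].
  - eapply le_trans; [eassumption| apply join_le_r].
Qed.

Lemma meet_mono x y x' y' : ble x x' -> ble y y' -> ble (bmeet x y) (bmeet x' y').
Proof.
  intros. apply le_meet.
  - eapply le_trans; [apply meet_le_l|eassumption].
  - eapply le_trans; [apply meet_le_r|eassumption].
Qed.

Lemma res x y z : ble z (bimp x y) <-> ble (bprod x z) y.
Proof. apply residuation. Qed.

Lemma prod_one_l x : bprod bone x = x.
Proof. rewrite prod_comm. apply prod_one. Qed.

Lemma prod_mono_r x y z : ble x y -> ble (bprod z x) (bprod z y).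
Proof.
  intro H. apply res. eapply le_trans; [exact H|]. apply res. apply le_refl.
Qed.

Lemma prod_mono_l x y z : ble x y -> ble (bprod x z) (bprod y z).
Proof. intro H. rewrite (prod_comm _ x), (prod_comm _ y). now apply prod_mono_r. Qed.

Lemma prod_mono x y x' y' : ble x x' -> ble y y' -> ble (bprod x y) (bprod x' y').
Proof. intros. eapply le_trans; [apply prod_mono_l; eassumption| apply prod_mono_r; assumption]. Qed.

Lemma prod_le_l x y : ble (bprod x y) x.
Proof. rewrite <- (prod_one _ x) at 2. apply prod_mono_r, le_one. Qed.

Lemma prod_le_r x y : ble (bprod x y) y.
Proof. rewrite prod_comm. apply prod_le_l. Qed.

Lemma mp x y : ble (bprod x (bimp x y)) y.
Proof. apply res, le_refl. Qed.

Lemma imp_one_iff x y : bimp x y = bone <-> ble x y.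
Proof.
  split; intro H.
  - assert (H1 : ble bone (bimp x y)) by (rewrite H; apply le_refl).
    apply res in H1. rewrite prod_one in H1. exact H1.
  - apply one_le. apply res. rewrite prod_one. exact H.
Qed.

Lemma le_imp x y : ble y (bimp x y).
Proof. apply res, prod_le_r. Qed.

Lemma imp_mono_r x y y' : ble y y' -> ble (bimp x y) (bimp x y').
Proof. intro H. apply res. eapply le_trans; [apply mp|exact H]. Qed.

Lemma imp_anti_l x x' y : ble x x' -> ble (bimp x' y) (bimp x y).
Proof. intro H. apply res. eapply le_trans; [apply prod_mono_l; exact H|apply mp]. Qed.

Lemma one_imp y : bimp bone y = y.
Proof.
  apply le_antisym.
  - eapply le_trans; [|apply mp]. rewrite prod_one_l. apply le_refl.
  - apply le_imp.
Qed.

Lemma imp_refl x : bimp x x = bone.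
Proof. apply imp_one_iff, le_refl. Qed.

Lemma prod_zero x : bprod x bzero = bzero.
Proof. apply le_zero_eq, prod_le_r. Qed.

Lemma zero_prod x : bprod bzero x = bzero.
Proof. apply le_zero_eq, prod_le_l. Qed.

Lemma imp_one_r x : bimp x bone = bone.
Proof. apply imp_one_iff, le_one. Qed.

Lemma zero_imp x : bimp bzero x = bone.
Proof. apply imp_one_iff, le_zero. Qed.

Lemma curry x y z : bimp (bprod x y) z = bimp x (bimp y z).
Proof.
  apply le_antisym; apply res.
  - apply res. rewrite prod_assoc, (prod_comm _ y x). apply mp.
  - rewrite (prod_comm _ x y), <- prod_assoc. eapply le_trans.
    + apply prod_mono_r. apply mp.
    + apply mp.
Qed.

Lemma prod_join x y z : bprod x (bjoin y z) = bjoin (bprod x y) (bprod x z).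
Proof.
  apply le_antisym.
  - apply res. apply join_lub; apply res; [apply join_le_l|apply join_le_r].
  - apply join_lub; apply prod_mono_r; [apply join_le_l|apply join_le_r].
Qed.

Lemma join_prod x y z : bprod (bjoin y z) x = bjoin (bprod y x) (bprod z x).
Proof. rewrite prod_comm, prod_join, (prod_comm _ x y), (prod_comm _ x z). reflexivity. Qed.

Lemma prod_le_meet x y : ble (bprod x y) (bmeet x y).
Proof. apply le_meet; [apply prod_le_l|apply prod_le_r]. Qed.

Lemma join_prod_le a b c : ble (bprod (bjoin a b) (bjoin a c)) (bjoin a (bprod b c)).
Proof.
  rewrite join_prod, !prod_join. apply join_lub; apply join_lub.
  - eapply le_trans; [apply prod_le_l|apply join_le_l].
  - eapply le_trans; [apply prod_le_l|apply join_le_l].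
  - eapply le_trans; [apply prod_le_r|apply join_le_l].
  - apply join_le_r.
Qed.

Lemma join_one_prod a b c : bjoin a b = bone -> bjoin a c = bone -> bjoin a (bprod b c) = bone.
Proof.
  intros H1 H2. apply one_le. pose proof (join_prod_le a b c) as H.
  rewrite H1, H2, prod_one in H. exact H.
Qed.

Lemma imp_meet x y z : bimp (bmeet x y) z = bjoin (bimp x z) (bimp y z).
Proof.
  apply le_antisym.
  - rewrite <- (prod_one _ (bimp (bmeet x y) z)).
    rewrite <- (prelinearity M x y), prod_join. apply join_mono.
    + apply res. rewrite prod_assoc. rewrite (prod_comm _ x).
      rewrite <- prod_assoc. rewrite <- divisibility.
      apply res. apply res. rewrite prod_comm. apply mp.
    + apply res. rewrite prod_assoc. rewrite (prod_comm _ y).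
      rewrite <- prod_assoc. rewrite <- divisibility. rewrite meet_comm.
      apply res. apply res. rewrite prod_comm. apply mp.
  - apply join_lub; apply imp_anti_l; [apply meet_le_l|apply meet_le_r].
Qed.

Fixpoint pw x (n : nat) : M := match n with 0 => bone | S n => bprod x (pw x n) end.

Lemma pw_add x n m : pw x (n + m) = bprod (pw x n) (pw x m).
Proof. induction n; simpl. - now rewrite prod_one_l. - now rewrite IHn, prod_assoc. Qed.

Lemma pw_mono x y n : ble x y -> ble (pw x n) (pw y n).
Proof. intro H; induction n; simpl. apply le_refl. now apply prod_mono. Qed.

Lemma pw_join x y n : bjoin x y = bone -> bjoin (pw x n) y = bone.
Proof.
  intro H. induction n; simpl. apply join_one_l.
  rewrite join_comm. apply join_one_prod; rewrite join_comm; assumption.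
Qed.

Lemma pw_join2 x y n m : bjoin x y = bone -> bjoin (pw x n) (pw y m) = bone.
Proof.
  intro H. apply pw_join. rewrite join_comm. apply pw_join. now rewrite join_comm.
Qed.

Lemma pw_le_one x n : ble (pw x n) bone.
Proof. apply le_one. Qed.

Lemma pw_prod_le x y n : ble (pw x n) (bprod x y) -> True. Proof. auto. Qed.

Lemma prod_neg x : bprod x (bneg x) = bzero.
Proof. apply le_zero_eq, mp. Qed.

Lemma comp_meet_prod z d : bjoin d (bneg d) = bone -> bmeet z d = bprod z d.
Proof.
  intro H. apply le_antisym; [|apply prod_le_meet].
  rewrite <- (prod_one _ (bmeet z d)), <- H, prod_join.
  apply join_lub.
  - apply prod_mono_l. apply meet_le_l.
  - eapply le_trans; [apply prod_mono_l; apply meet_le_r|]. rewrite prod_neg. apply le_zero.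
Qed.

Lemma bool_of_comp d : bjoin d (bneg d) = bone -> is_boolean M d.
Proof.
  intro H. split.
  - apply le_antisym.
    + rewrite <- (prod_one _ (bneg (bneg d))), <- H, prod_join.
      apply join_lub.
      * apply prod_le_r.
      * rewrite prod_comm, prod_neg. apply le_zero.
    + apply res. rewrite prod_comm. apply mp.
  - rewrite <- comp_meet_prod by exact H. apply meet_idem.
Qed.

Lemma comp_of_bool d : is_boolean M d -> bjoin d (bneg d) = bone.
Proof.
  intros [H1 H2].
  assert (E2 : bimp d (bneg d) = bneg d) by (unfold bneg; rewrite <- curry, H2; reflexivity).
  transitivity (bimp (bmeet (bneg d) d) bzero).
  - rewrite imp_meet. change (bjoin d (bneg d) = bjoin (bneg (bneg d)) (bneg d)).
    rewrite H1. reflexivity.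
  - rewrite meet_comm, divisibility, E2, prod_neg. apply zero_imp.
Qed.

Lemma comp_neg d : bjoin d (bneg d) = bone -> bjoin (bneg d) (bneg (bneg d)) = bone.
Proof.
  intro H. destruct (bool_of_comp d H) as [H1 _]. rewrite H1, join_comm. exact H.
Qed.

Lemma comp_idem d : bjoin d (bneg d) = bone -> bprod d d = d.
Proof. intro H. apply (bool_of_comp d H). Qed.

Lemma comp_join_distr u v d : bjoin d (bneg d) = bone ->
  bmeet (bjoin u v) d = bjoin (bmeet u d) (bmeet v d).
Proof. intro H. rewrite !(comp_meet_prod _ d H). apply join_prod. Qed.

Lemma comp_imp x y d : bjoin d (bneg d) = bone ->
  bmeet (bimp (bmeet x d) (bmeet y d)) d = bmeet (bimp x y) d.
Proof.
  intro H. apply le_antisym.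
  - apply le_meet; [|apply meet_le_r].
    apply res. rewrite (comp_meet_prod (bimp (bmeet x d) (bmeet y d)) d H).
    set (W := bimp (bmeet x d) (bmeet y d)).
    replace (bprod x (bprod W d)) with (bprod (bprod x d) W)
      by (rewrite <- prod_assoc, (prod_comm _ d W); reflexivity).
    rewrite <- (comp_meet_prod x d H). eapply le_trans; [apply mp|apply meet_le_l].
  - apply le_meet; [|apply meet_le_r].
    apply res. apply le_meet.
    + eapply le_trans; [apply prod_mono; apply meet_le_l|apply mp].
    + eapply le_trans; [apply prod_le_l|apply meet_le_r].
Qed.

End Basic.

Section Filt.
Variable M : BL.
Implicit Types x y z a b c d e : M.

Lemma filter_one (F : M -> Prop) : is_filter M F -> F bone.
Proof. intros [[x Hx] [_ Hu]]. apply (Hu x); auto. apply le_one. Qed.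

Lemma filter_pw (F : M -> Prop) x n : is_filter M F -> F x -> F (pw M x n).
Proof.
  intros HF Hx. induction n; simpl. now apply filter_one.
  destruct HF as [_ [Hp _]]. now apply Hp.
Qed.

Lemma triv_all : bzero = (bone : M) -> forall x : M, x = bone.
Proof. intros H x. rewrite <- H. apply le_zero_eq. rewrite H. apply le_one. Qed.

Definition pfil a : M -> Prop := fun z => exists n, ble (pw M a n) z.

Lemma pfil_filter a : is_filter M (pfil a).
Proof.
  split; [|split].
  - exists a, 1. simpl. rewrite prod_one. apply le_refl.
  - intros x y [n Hn] [m Hm]. exists (n + m). rewrite pw_add. now apply prod_mono.
  - intros x y [n Hn] Hxy. exists n. eapply le_trans; eauto.
Qed.

Lemma pfil_self a : pfil a a.
Proof. exists 1. simpl. rewrite prod_one. apply le_refl. Qed.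

End Filt.

Section SM.
Variable M : BL.
Variable tau : M -> M.
Hypothesis Htau : is_state_morphism M tau.
Implicit Types x y z a b c d e : M.

Lemma t_meet x y : tau (bmeet x y) = bmeet (tau x) (tau y).
Proof. apply Htau. Qed.
Lemma t_join x y : tau (bjoin x y) = bjoin (tau x) (tau y).
Proof. apply Htau. Qed.
Lemma t_prod x y : tau (bprod x y) = bprod (tau x) (tau y).
Proof. apply Htau. Qed.
Lemma t_imp x y : tau (bimp x y) = bimp (tau x) (tau y).
Proof. apply Htau. Qed.
Lemma t_zero : tau bzero = bzero.
Proof. apply Htau. Qed.
Lemma t_one : tau bone = bone.
Proof. apply Htau. Qed.
Lemma t_idem x : tau (tau x) = tau x.
Proof. apply Htau. Qed.
Lemma t_neg x : tau (bneg x) = bneg (tau x).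
Proof. unfold bneg. now rewrite t_imp, t_zero. Qed.
Lemma t_mono x y : ble x y -> ble (tau x) (tau y).
Proof. unfold ble. intro H. now rewrite <- t_meet, H. Qed.
Lemma t_pw x n : tau (pw M x n) = pw M (tau x) n.
Proof. induction n; simpl. apply t_one. now rewrite t_prod, IHn. Qed.

Definition TF a := Ker M tau a \/ tau a = a.

Lemma pfil_tau a : TF a -> is_tau_filter M tau (pfil M a).
Proof.
  intro Ha. split. apply pfil_filter.
  intros x [n Hn]. destruct Ha as [Ha|Ha].
  - exists 0. simpl. apply t_mono in Hn. rewrite t_pw, Ha in Hn.
    replace (pw M bone n) with (bone : M) in Hn.
    + apply one_le in Hn. rewrite Hn. apply le_refl.
    + clear. induction n; simpl; auto. now rewrite <- IHn, prod_one.
  - exists n. apply t_mono in Hn. rewrite t_pw, Ha in Hn. exact Hn.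
Qed.

Lemma Ker_le x y : Ker M tau x -> ble x y -> Ker M tau y.
Proof. unfold Ker; intros H1 H2. apply t_mono in H2. rewrite H1 in H2. now apply one_le. Qed.

Lemma Ker_filter : is_tau_filter M tau (Ker M tau).
Proof.
  split; [split; [|split]|].
  - exists bone. apply t_one.
  - unfold Ker; intros x y Hx Hy. now rewrite t_prod, Hx, Hy, prod_one.
  - apply Ker_le.
  - unfold Ker; intros x Hx. now rewrite t_idem.
Qed.

Section SI.
Hypothesis HSI : SI_SM M tau.

Lemma SI_join a b : bjoin a b = bone -> TF a -> TF b -> a = bone \/ b = bone.
Proof.
  intros Hab Ha Hb. destruct HSI as [F [HF [[g [Hg gn1]] Hl]]].
  apply NNPP; intro Hn. apply not_or_and in Hn as [Ha1 Hb1].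
  assert (G1 := Hl _ (pfil_tau a Ha) (ex_intro _ a (conj (pfil_self M a) Ha1)) g Hg).
  assert (G2 := Hl _ (pfil_tau b Hb) (ex_intro _ b (conj (pfil_self M b) Hb1)) g Hg).
  destruct G1 as [n Hn], G2 as [m Hm].
  apply gn1, one_le. rewrite <- (pw_join2 M a b n m Hab). now apply join_lub.
Qed.

Lemma lin_of_join x y : bimp x y = bone \/ bimp y x = bone -> ble x y \/ ble y x.
Proof. intros [H|H]; [left|right]; now apply imp_one_iff. Qed.

Lemma chainT x y : ble (tau x) (tau y) \/ ble (tau y) (tau x).
Proof.
  apply lin_of_join. apply SI_join.
  - apply prelinearity.
  - right. now rewrite t_imp, !t_idem.
  - right. now rewrite t_imp, !t_idem.
Qed.

Lemma Ker_lin x y : Ker M tau x -> Ker M tau y -> ble x y \/ ble y x.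
Proof.
  unfold Ker; intros Hx Hy. apply lin_of_join. apply SI_join.
  - apply prelinearity.
  - left. unfold Ker. now rewrite t_imp, Hx, Hy, imp_refl.
  - left. unfold Ker. now rewrite t_imp, Hx, Hy, imp_refl.
Qed.

Lemma disj_SI : disjunction_property M tau.
Proof.
  intros x y Hx [z Hz] Hj. apply SI_join; auto. left; auto.
  right. subst y. apply t_idem.
Qed.

Lemma chainT_join x y : bjoin (tau x) (tau y) = bone -> tau x = bone \/ tau y = bone.
Proof.
  intro H. destruct (chainT x y) as [L|L]; apply le_join_iff in L.
  - right. now rewrite <- L. - left. rewrite join_comm in L. now rewrite <- L.
Qed.

Hypothesis Hnf : ~ faithful M tau.

Lemma nontriv : bzero <> (bone : M).
Proof.
  intro H. apply Hnf. intros a _. now apply triv_all.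
Qed.

Lemma F0_Ker F : least_nontrivial_tau_filter M tau F -> forall x, F x -> Ker M tau x.
Proof.
  intros [_ [_ Hl]]. apply Hl. apply Ker_filter.
  apply NNPP; intro H. apply Hnf. intros a Ha. apply NNPP; intro Ha1. apply H. now exists a.
Qed.

Lemma KerSI : Ker_SI M tau.
Proof.
  destruct HSI as [F HF]. pose proof (F0_Ker F HF) as HK.
  destruct HF as [[[Hne [Hp Hu]] Ht] [Hnt Hl]].
  exists F. split; [|split].
  - split; auto. split; auto. split; auto. intros x y Hx _ Hxy. eauto.
  - exact Hnt.
  - intros H [HHK [HHne [HHp HHu]]] HHnt. apply Hl; auto.
    split; [split; [|split]|]; auto.
    + intros x y Hx Hxy. apply (HHu x); auto. eapply Ker_le; eauto.
    + intros x Hx. rewrite (HHK x Hx). destruct HHne as [w Hw].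
      apply (HHu w); auto. unfold Ker. apply t_one. apply le_one.
Qed.

Definition Kperp z := forall k, Ker M tau k -> bjoin z k = bone.

Lemma Kperp_up z z' : Kperp z -> ble z z' -> Kperp z'.
Proof.
  intros H Hz k Hk. apply one_le. rewrite <- (H k Hk). apply join_mono; auto. apply le_refl.
Qed.

Lemma Kperp_prod z z' : Kperp z -> Kperp z' -> Kperp (bprod z z').
Proof.
  intros H H' k Hk. rewrite join_comm. apply join_one_prod; rewrite join_comm; auto.
Qed.

Lemma Kperp_pw z n : Kperp z -> Kperp (pw M z n).
Proof. intro H. induction n; simpl. intros k _. apply join_one_l. now apply Kperp_prod. Qed.

Lemma Kperp_dich x y : Kperp (bimp x y) \/ Kperp (bimp y x).
Proof.
  apply NNPP; intro H. apply not_or_and in H as [H1 H2].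
  apply not_all_ex_not in H1 as [k1 H1]. apply not_all_ex_not in H2 as [k2 H2].
  apply imply_to_and in H1 as [Hk1 H1]. apply imply_to_and in H2 as [Hk2 H2].
  assert (exists m, Ker M tau m /\ ble m k1 /\ ble m k2) as [m [Hm [Hm1 Hm2]]].
  { destruct (Ker_lin k1 k2 Hk1 Hk2).
    - exists k1. split; auto. split; auto. apply le_refl.
    - exists k2. split; auto. split; auto. apply le_refl. }
  assert (U1 : bjoin (bimp x y) m <> bone).
  { intro E. apply H1, one_le. rewrite <- E. apply join_mono; auto. apply le_refl. }
  assert (U2 : bjoin (bimp y x) m <> bone).
  { intro E. apply H2, one_le. rewrite <- E. apply join_mono; auto. apply le_refl. }
  assert (K1 : Ker M tau (bjoin (bimp x y) m)) by (eapply Ker_le; [exact Hm|apply join_le_r]).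
  assert (K2 : Ker M tau (bjoin (bimp y x) m)) by (eapply Ker_le; [exact Hm|apply join_le_r]).
  assert (J : ble bone (bjoin (bjoin (bimp x y) m) (bjoin (bimp y x) m))).
  { rewrite <- (prelinearity M x y). apply join_mono; apply join_le_l. }
  destruct (Ker_lin _ _ K1 K2) as [L|L]; apply le_join_iff in L.
  - apply U2. apply one_le. now rewrite <- L.
  - apply U1. apply one_le. rewrite join_comm in L. now rewrite <- L.
Qed.

Definition Ftau x := forall n, pw M (tau x) n <> bzero.

Lemma ne_zero_up x y : x <> bzero -> ble x y -> y <> bzero.
Proof. intros H Hxy E. subst. apply H. now apply le_zero_eq. Qed.

Lemma Ker_Ftau x : Ker M tau x -> Ftau x.
Proof.
  intros Hx n. rewrite Hx. replace (pw M bone n) with (bone : M).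
  - intro E. apply nontriv. now rewrite E.
  - clear. induction n; simpl; auto. now rewrite <- IHn, prod_one.
Qed.

Lemma Ftau_filter : is_filter M Ftau.
Proof.
  split; [|split].
  - exists bone. apply Ker_Ftau. apply t_one.
  - intros x y Hx Hy n. rewrite t_prod.
    destruct (chainT x y) as [L|L].
    + apply (ne_zero_up (pw M (tau x) (n + n))); auto.
      rewrite pw_add. replace (pw M (bprod (tau x) (tau y)) n) with
        (bprod (pw M (tau x) n) (pw M (tau y) n)).
      * apply prod_mono_r. now apply pw_mono.
      * clear. induction n; simpl. apply prod_one.
        rewrite <- IHn. rewrite !prod_assoc. f_equal.
        rewrite <- !prod_assoc. f_equal. apply prod_comm.
    + apply (ne_zero_up (pw M (tau y) (n + n))); auto.
      rewrite pw_add. replace (pw M (bprod (tau x) (tau y)) n) with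
        (bprod (pw M (tau x) n) (pw M (tau y) n)).
      * apply prod_mono_l. now apply pw_mono.
      * clear. induction n; simpl. apply prod_one.
        rewrite <- IHn. rewrite !prod_assoc. f_equal.
        rewrite <- !prod_assoc. f_equal. apply prod_comm.
  - intros x y Hx Hxy n. apply (ne_zero_up _ _ (Hx n)). apply pw_mono. now apply t_mono.
Qed.

Lemma Ftau_max : maximal_filter M Ftau.
Proof.
  split.
  - split. apply Ftau_filter. intro H. apply (H 1). simpl. rewrite t_zero. apply zero_prod.
  - intros G [HG HG0] Hsub g Hg. intros n E.
    set (c := pw M g n).
    assert (Hc : G c) by (now apply filter_pw).
    assert (Hc0 : tau c = bzero) by (unfold c; now rewrite t_pw).
    assert (Hcn : G (bneg c)).
    { apply Hsub. apply Ker_Ftau. unfold Ker. rewrite t_neg, Hc0. apply zero_imp. }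
    apply HG0. rewrite <- (prod_neg M c). destruct HG as [_ [Hp _]]. now apply Hp.
Qed.


Section NoBool.
Hypothesis Hnb : no_nontrivial_boolean M.

Lemma comp01 (p : M) : bjoin p (bneg p) = bone -> p = bzero \/ p = bone.
Proof. intro H. apply Hnb. now apply bool_of_comp. Qed.

Lemma finite_order c : tau c = bzero -> exists m, pw M c m = bzero.
Proof.
  intro Hc. apply NNPP; intro Hinf.
  assert (Hi : forall m, pw M c m <> bzero) by (intros m E; apply Hinf; now exists m).
  assert (Kn : Ker M tau (bneg c)) by (unfold Ker; rewrite t_neg, Hc; apply zero_imp).
  destruct (Kperp_dich c (bneg c)) as [P|P].
  - specialize (P _ Kn).
    rewrite join_comm in P. rewrite (proj1 (le_join_iff _ _ _) (le_imp M c (bneg c))) in P.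
    apply imp_one_iff in P. apply res in P. apply (Hi 2). simpl. rewrite prod_one.
    now apply le_zero_eq.
  - set (b := bprod (bneg c) (bneg c)).
    assert (Kb : Ker M tau b) by (unfold b, Ker; now rewrite t_prod, Kn, prod_one).
    assert (Pb : Kperp (bneg b)).
    { eapply Kperp_up; [exact P|]. unfold b, bneg at 3. apply res.
      rewrite <- prod_assoc. eapply le_trans; [apply prod_mono_r; apply mp|].
      rewrite prod_comm. apply mp. }
    specialize (Pb b Kb). rewrite join_comm in Pb.
    destruct (comp01 b Pb) as [E|E].
    + apply nontriv. rewrite E in Kb. unfold Ker in Kb. now rewrite <- Kb, t_zero.
    + assert (E' : bneg c = bone) by (apply one_le; rewrite <- E; apply prod_le_l).
      apply (Hi 1). simpl. rewrite prod_one. apply le_zero_eq.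
      now apply imp_one_iff.
Qed.

Lemma max_sub_Ftau G : maximal_filter M G -> forall x, G x -> Ftau x.
Proof.
  intros [[HG HG0] _] x Hx n E.
  assert (Hc : G (pw M x n)) by (now apply filter_pw).
  destruct (finite_order (pw M x n)) as [m Hm]. { now rewrite t_pw. }
  apply HG0. rewrite <- Hm. now apply filter_pw.
Qed.

Lemma max_eq G : maximal_filter M G -> forall x, G x <-> Ftau x.
Proof.
  intros HG x. split. now apply max_sub_Ftau.
  destruct HG as [HGp HGm]. apply HGm. apply Ftau_max. now apply max_sub_Ftau.
Qed.

Lemma local_NB : is_local M.
Proof.
  exists Ftau. split. apply Ftau_max. intros G HG x. now apply max_eq.
Qed.

Lemma Rad1_iff x : Rad1 M x <-> Ftau x.
Proof.
  split. intro H. apply H, Ftau_max.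
  intros H G HG. now apply (max_eq G HG).
Qed.

Lemma Kperp_Ftau b : Kperp b -> Ftau b.
Proof.
  intros Pb n E. set (p := pw M b n).
  assert (Pp : Kperp p) by (now apply Kperp_pw).
  assert (Hp0 : tau p = bzero) by (unfold p; now rewrite t_pw).
  assert (Kn : Ker M tau (bneg p)) by (unfold Ker; rewrite t_neg, Hp0; apply zero_imp).
  destruct (comp01 p (Pp _ Kn)) as [E0|E1].
  - apply Hnf. intros k Hk. specialize (Pp k Hk). rewrite E0 in Pp.
    rewrite join_comm, join_zero in Pp. exact Pp.
  - apply nontriv. rewrite <- Hp0, E1. now rewrite t_one.
Qed.

Lemma lin_crit (Q : forall a b, Ker M tau a -> Ftau b -> ble a b \/ ble b a) :
  linearly_ordered M.
Proof.
  assert (KQ : forall a b, bjoin a b = bone -> Ker M tau a -> a = bone \/ b = bone).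
  { intros a b Hab Ha. apply NNPP; intro H. apply not_or_and in H as [Ha1 Hb1].
    assert (Pb : Kperp b).
    { intros k Hk. destruct (Ker_lin a k Ha Hk) as [L|L].
      - apply one_le. rewrite <- Hab, join_comm. apply join_mono; auto. apply le_refl.
      - assert (Kbk : Ker M tau (bjoin b k)) by (eapply Ker_le; [exact Hk|apply join_le_r]).
        destruct (Ker_lin _ _ Kbk Ha) as [L2|L2].
        + exfalso. apply Ha1. apply one_le. rewrite <- Hab. apply join_lub. apply le_refl.
          eapply le_trans; [apply join_le_l|exact L2].
        + apply one_le. rewrite <- Hab. apply join_lub; auto. apply join_le_l. }
    destruct (Q a b Ha (Kperp_Ftau b Pb)) as [L|L]; apply le_join_iff in L.
    - apply Hb1. now rewrite <- L.
    - apply Ha1. rewrite join_comm in L. now rewrite <- L. }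
  intros x y. apply lin_of_join.
  assert (J := prelinearity M x y).
  assert (TJ : bjoin (tau (bimp x y)) (tau (bimp y x)) = bone) by now rewrite <- t_join, J, t_one.
  destruct (chainT_join _ _ TJ) as [T|T].
  - now apply KQ.
  - rewrite join_comm in J. destruct (KQ _ _ J T); auto.
Qed.

End NoBool.
End SI.
End SM.

Lemma prod_ble (A B : BL) (p q : prodBL A B) :
  ble p q <-> ble (fst p) (fst q) /\ ble (snd p) (snd q).
Proof. destruct p, q. unfold ble. cbn. apply pair_eq_iff. Qed.

Section Back.
Variable M : BL.
Variable tau : M -> M.
Hypothesis Htau : is_state_morphism M tau.

Lemma i_SI : is_identity M tau -> SI_BL M -> SI_SM M tau.
Proof.
  intros Hid [F [HF [Hnt Hl]]]. exists F. split; [|split]; auto.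
  - split; auto. intros x Hx. now rewrite Hid.
  - intros G [HG _] HGn. now apply Hl.
Qed.

Lemma ii_SI : Ker_SI M tau -> disjunction_property M tau -> SI_SM M tau.
Proof.
  intros [G0 [[HK [Hne [Hp Hu]]] [[g [Hg gn1]] Hl]]] Hd.
  assert (G1 : G0 bone).
  { destruct Hne as [w Hw]. apply (Hu w); auto. apply (t_one M tau Htau). apply le_one. }
  exists G0. split; [|split].
  - split; [split; [|split]|]; auto.
    + intros x y Hx Hxy. apply (Hu x); auto. apply (Ker_le M tau Htau x); auto.
    + intros x Hx. rewrite (HK x Hx). exact G1.
  - exists g; auto.
  - intros G [[HGne [HGp HGu]] HGt] [x [Hx xn1]].
    assert (GK : is_Ker_filter M tau (fun z => G z /\ Ker M tau z)).
    { split; [|split; [|split]].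
      - intros z [_ Hz]; auto.
      - exists bone. split. apply (HGu x); auto. apply le_one. apply (t_one M tau Htau).
      - intros a b [Ha Ka] [Hb Kb]. split; auto. unfold Ker in *. rewrite (t_prod M tau Htau), Ka, Kb. apply prod_one.
      - intros a b [Ha _] Kb Hab. split; auto. eauto. }
    assert (GN : nontrivial_set M (fun z => G z /\ Ker M tau z)).
    { destruct (classic (tau x = bone)) as [T|T].
      - exists x. split; auto.
      - exists (bjoin g (tau x)). split; [split|].
        + apply (HGu (tau x)); auto. apply join_le_r.
        + apply (Ker_le M tau Htau g); [apply HK; auto| apply join_le_l].
        + intro E. destruct (Hd g (tau x) (HK g Hg) (ex_intro _ x eq_refl) E); auto. }
    intros z Hz. apply (Hl _ GK GN z Hz).
Qed.
End Back.

Lemma iii_SI (M : BL) (tau : M -> M) (A B : BL) (h : A -> B)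
  (Hh : is_BLhom A B h) (hinj : forall x y, h x = h y -> x = y) (SIB : SI_BL B)
  (f : M -> prodBL A B) (Hf : is_BLhom M (prodBL A B) f)
  (finj : forall x y, f x = f y -> x = y) (fsurj : forall p, exists x, f x = p)
  (fc : forall x, f (tau x) = tau_h A B h (f x)) : SI_SM M tau.
Proof.
  destruct Hf as [fm [fj [fp [fi [f0 f1]]]]].
  destruct Hh as [_ [_ [_ [_ [_ h1]]]]].
  assert (fle : forall x y, ble x y -> ble (f x) (f y)).
  { unfold ble; intros x y H. now rewrite <- fm, H. }
  assert (fle' : forall x y, ble (f x) (f y) -> ble x y).
  { unfold ble; intros x y H. apply finj. now rewrite fm. }
  destruct SIB as [FB [HFB [[q0 [Hq0 q0n]] HFl]]].
  assert (FB1 : FB bone) by (now apply filter_one).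
  destruct HFB as [HFBne [HFBp HFBu]].
  set (F0 := fun x => fst (f x) = bone /\ FB (snd (f x))).
  exists F0. split; [|split].
  - split; [split; [|split]|].
    + exists bone. unfold F0. rewrite f1. split; auto.
    + intros x y [Hx1 Hx2] [Hy1 Hy2]. unfold F0. rewrite fp. cbn.
      rewrite Hx1, Hy1, prod_one. split; auto.
    + intros x y [Hx1 Hx2] Hxy. apply fle, prod_ble in Hxy as [L1 L2].
      split. apply one_le. now rewrite <- Hx1. eauto.
    + intros x [Hx1 Hx2]. unfold F0. rewrite fc. unfold tau_h. cbn. rewrite Hx1, h1.
      split; auto.
  - destruct (fsurj (bone, q0)) as [y Hy]. exists y. split.
    + unfold F0. now rewrite Hy.
    + intro E. subst y. rewrite f1 in Hy. apply q0n. inversion Hy. reflexivity.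
  - intros G [[HGne [HGp HGu]] HGt] [x [Hx xn1]].
    assert (C : exists y, G y /\ fst (f y) = bone /\ snd (f y) <> bone).
    { destruct (classic (fst (f x) = bone)) as [P|P].
      - exists x. split; auto. split; auto. intro Q. apply xn1. apply finj.
        rewrite f1. destruct (f x); cbn in *; subst; reflexivity.
      - destruct (fsurj (bone, h (fst (f x)))) as [y Hy]. exists y.
        split; [|split]; [| now rewrite Hy| ].
        + apply (HGu (tau x)); auto. apply fle'. rewrite fc, Hy. unfold tau_h.
          apply prod_ble. cbn. split. apply le_one. apply le_refl.
        + rewrite Hy. cbn. intro E. apply P. apply hinj. now rewrite E, h1. }
    destruct C as [y0 [Gy0 [Fy01 Fy02]]].
    set (GB := fun q => exists y, G y /\ f y = (bone, q)).
    assert (GBf : is_filter B GB).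
    { split; [|split].
      - exists bone. exists bone. split. apply (HGu x); auto. apply le_one. apply f1.
      - intros a b [y [Gy Hy]] [z [Gz Hz]]. exists (bprod y z). split; auto.
        rewrite fp, Hy, Hz. cbn. now rewrite prod_one.
      - intros a b [y [Gy Hy]] Hab. destruct (fsurj (bone, b)) as [z Hz]. exists z.
        split; auto. apply (HGu y); auto. apply fle'. rewrite Hy, Hz. apply prod_ble.
        cbn. split; auto. apply le_refl. }
    assert (GBn : nontrivial_set B GB).
    { exists (snd (f y0)). split; auto. exists y0. split; auto.
      rewrite <- Fy01. apply surjective_pairing. }
    intros z [Hz1 Hz2]. destruct (HFl GB GBf GBn _ Hz2) as [y [Gy Hy]].
    replace z with y; auto. apply finj. rewrite Hy, <- Hz1. symmetry. apply surjective_pairing.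
Qed.

Lemma sig_ext {T : Type} {P : T -> Prop} (x y : {t | P t}) :
  proj1_sig x = proj1_sig y -> x = y.
Proof. destruct x, y; simpl; intros ->; f_equal; apply proof_irrelevance. Qed.

Lemma sig_eq_iff {T : Type} {P : T -> Prop} (x y : {t | P t}) :
  x = y <-> proj1_sig x = proj1_sig y.
Proof. split. intros ->; auto. apply sig_ext. Qed.

Section Sub.
Variable M : BL.
Variable tau : M -> M.
Hypothesis Htau : is_state_morphism M tau.

Definition Acar := {x : M | tau x = x}.

Definition mA_meet (x y : Acar) : Acar :=
  exist (fun t => tau t = t) (bmeet (proj1_sig x) (proj1_sig y))
    (eq_trans (t_meet M tau Htau _ _) (f_equal2 bmeet (proj2_sig x) (proj2_sig y))).
Definition mA_join (x y : Acar) : Acar :=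
  exist (fun t => tau t = t) (bjoin (proj1_sig x) (proj1_sig y))
    (eq_trans (t_join M tau Htau _ _) (f_equal2 bjoin (proj2_sig x) (proj2_sig y))).
Definition mA_prod (x y : Acar) : Acar :=
  exist (fun t => tau t = t) (bprod (proj1_sig x) (proj1_sig y))
    (eq_trans (t_prod M tau Htau _ _) (f_equal2 bprod (proj2_sig x) (proj2_sig y))).
Definition mA_imp (x y : Acar) : Acar :=
  exist (fun t => tau t = t) (bimp (proj1_sig x) (proj1_sig y))
    (eq_trans (t_imp M tau Htau _ _) (f_equal2 bimp (proj2_sig x) (proj2_sig y))).
Definition mA_zero : Acar := exist (fun t => tau t = t) bzero (t_zero M tau Htau).
Definition mA_one : Acar := exist (fun t => tau t = t) bone (t_one M tau Htau).

Definition ABL : BL.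
Proof.
  refine (MkBL Acar mA_meet mA_join mA_prod mA_imp mA_zero mA_one _ _ _ _ _ _ _ _ _ _ _ _ _ _);
  intros.
  all: try (apply sig_ext; simpl; first [apply meet_comm | apply meet_assoc | apply join_comm
        | apply join_assoc | apply meet_absorb | apply join_absorb
        | apply meet_zero | apply join_one | apply prod_comm | apply prod_assoc
        | apply prod_one | apply divisibility | apply prelinearity]).
  split; intro H; apply sig_ext; apply (f_equal (@proj1_sig _ _)) in H; simpl in *;
    apply residuation; exact H.
Defined.

Definition mkA (x : M) : ABL := exist (fun t => tau t = t) (tau x) (t_idem M tau Htau x).

Variable d : M.
Hypothesis Hd : bjoin d (bneg d) = bone.

Definition Bcar := {x : M | ble x d}.
Definition mB_meet (x y : Bcar) : Bcar :=
  exist (fun t => ble t d) (bmeet (proj1_sig x) (proj1_sig y)) (le_trans _ _ _ _ (meet_le_l _ _ _) (proj2_sig x)).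
Definition mB_join (x y : Bcar) : Bcar :=
  exist (fun t => ble t d) (bjoin (proj1_sig x) (proj1_sig y)) (join_lub _ _ _ _ (proj2_sig x) (proj2_sig y)).
Definition mB_prod (x y : Bcar) : Bcar :=
  exist (fun t => ble t d) (bprod (proj1_sig x) (proj1_sig y)) (le_trans _ _ _ _ (prod_le_l _ _ _) (proj2_sig x)).
Definition mB_imp (x y : Bcar) : Bcar :=
  exist (fun t => ble t d) (bmeet (bimp (proj1_sig x) (proj1_sig y)) d) (meet_le_r M (bimp (proj1_sig x) (proj1_sig y)) d).
Definition mB_zero : Bcar := exist (fun t => ble t d) bzero (le_zero _ d).
Definition mB_one : Bcar := exist (fun t => ble t d) d (le_refl _ d).

Lemma le_d_meet (x : M) : ble x d -> bmeet x d = x.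
Proof. auto. Qed.

Lemma le_d_prod (x : M) : ble x d -> bprod x d = x.
Proof. intro H. rewrite <- (comp_meet_prod M x d Hd). exact H. Qed.

Definition BBL : BL.
Proof.
  refine (MkBL Bcar mB_meet mB_join mB_prod mB_imp mB_zero mB_one _ _ _ _ _ _ _ _ _ _ _ _ _ _);
  intros.
  all: try (apply sig_ext; simpl; first [apply meet_comm | apply meet_assoc | apply join_comm
        | apply join_assoc | apply meet_absorb | apply join_absorb
        | apply meet_zero | apply prod_comm | apply prod_assoc]).
  all: try apply sig_ext; simpl.
  - apply le_join_iff. apply (proj2_sig a).
  - apply le_d_prod, (proj2_sig a).
  - assert (E : ble (proj1_sig c) (bmeet (bimp (proj1_sig a) (proj1_sig b)) d) <->
            ble (bprod (proj1_sig a) (proj1_sig c)) (proj1_sig b)).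
    { rewrite <- res. split; intro H.
      + eapply le_trans; [exact H|apply meet_le_l].
      + apply le_meet; auto. apply (proj2_sig c). }
    split; intro H; [apply sig_ext | ]; apply (f_equal (@proj1_sig _ _)) in H; simpl in *.
    + apply E, H.
    + apply sig_ext. apply E, H.
  - rewrite (comp_meet_prod M _ d Hd), prod_assoc, <- divisibility.
    rewrite <- (comp_meet_prod M _ d Hd). symmetry. apply le_d_meet.
    eapply le_trans; [apply meet_le_l|apply (proj2_sig a)].
  - rewrite <- comp_join_distr by exact Hd. rewrite prelinearity, meet_comm. apply meet_one.
Defined.

Definition mkB (x : M) : BBL := exist (fun t => ble t d) (bmeet x d) (meet_le_r _ x d).

Lemma mkB_meet x y : mkB (bmeet x y) = bmeet (mkB x) (mkB y).
Proof.
  apply sig_ext. simpl. apply le_antisym.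
  - apply le_meet; apply meet_mono; [apply meet_le_l|apply le_refl|apply meet_le_r|apply le_refl].
  - apply le_meet. apply meet_mono; apply meet_le_l.
    eapply le_trans; apply meet_le_r.
Qed.

Lemma mkB_join x y : mkB (bjoin x y) = bjoin (mkB x) (mkB y).
Proof. apply sig_ext. simpl. now apply comp_join_distr. Qed.

Lemma mkB_prod x y : mkB (bprod x y) = bprod (mkB x) (mkB y).
Proof.
  apply sig_ext. simpl. rewrite !(comp_meet_prod M _ d Hd).
  rewrite <- (prod_assoc _ x d), (prod_assoc _ d y d), (prod_comm _ d y),
    <- (prod_assoc _ y d d), (comp_idem M d Hd). symmetry. apply prod_assoc.
Qed.

Lemma mkB_imp x y : mkB (bimp x y) = bimp (mkB x) (mkB y).
Proof. apply sig_ext. simpl. symmetry. now apply comp_imp. Qed.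

Lemma mkB_zero : mkB bzero = bzero.
Proof. apply sig_ext. simpl. rewrite meet_comm. apply meet_zero. Qed.

Lemma mkB_one : mkB bone = bone.
Proof. apply sig_ext. simpl. rewrite meet_comm. apply meet_one. Qed.

End Sub.

Section Iii.
Variable M : BL.
Variable tau : M -> M.
Hypothesis Htau : is_state_morphism M tau.
Hypothesis HSI : SI_SM M tau.
Hypothesis Hnf : ~ faithful M tau.
Variable F0 : M -> Prop.
Hypothesis HF0 : least_nontrivial_tau_filter M tau F0.
Variable e : M.
Hypothesis He : bjoin e (bneg e) = bone.
Hypothesis Hte : tau e = bone.
Hypothesis He1 : e <> bone.

Definition dd := bneg e.
Lemma Hdd : bjoin dd (bneg dd) = bone.
Proof. apply comp_neg, He. Qed.
Lemma tdd : tau dd = bzero.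
Proof. unfold dd. rewrite (t_neg M tau Htau), Hte. unfold bneg. apply one_imp. Qed.
Lemma ed0 : bmeet e dd = bzero.
Proof. rewrite (comp_meet_prod M e dd Hdd). apply prod_neg. Qed.
Lemma de1 : bjoin dd e = bone.
Proof. rewrite join_comm. exact He. Qed.

Lemma F0K x : F0 x -> Ker M tau x.
Proof. apply (F0_Ker M tau Htau Hnf F0 HF0). Qed.

Lemma KerUpD z : Ker M tau z -> ble dd z -> z = bone.
Proof.
  intros Kz Lz. apply NNPP; intro Hz.
  destruct HF0 as [_ [[g [Hg gn1]] Hl]].
  assert (G1 : (fun w => Ker M tau w /\ ble dd w) g).
  { apply (Hl (fun w => Ker M tau w /\ ble dd w)).
    - split; [split; [|split]|].
      + exists bone. split. apply (t_one M tau Htau). apply le_one.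
      + intros a b [Ka La] [Kb Lb]. split.
        * unfold Ker in *. now rewrite (t_prod M tau Htau), Ka, Kb, prod_one.
        * rewrite <- (comp_idem M dd Hdd). now apply prod_mono.
      + intros a b [Ka La] Lab. split. apply (Ker_le M tau Htau a); auto.
        eapply le_trans; eauto.
      + intros a [Ka La]. split. unfold Ker in *. now rewrite (t_idem M tau Htau).
        rewrite Ka. apply le_one.
    - exists z. split; auto.
    - exact Hg. }
  assert (G2 : (fun w => ble e w) g).
  { apply (Hl (fun w => ble e w)).
    - split; [split; [|split]|].
      + exists e. apply le_refl.
      + intros a b La Lb. rewrite <- (comp_idem M e He). now apply prod_mono.
      + intros a b La Lab. eapply le_trans; eauto.
      + intros a La. apply (t_mono M tau Htau) in La. rewrite Hte in La.
        apply one_le in La. rewrite La. apply le_one.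
    - exists e. split; auto. apply le_refl.
    - exact Hg. }
  destruct G1 as [_ G1]. apply gn1, one_le. rewrite <- de1. now apply join_lub.
Qed.

Definition AA := ABL M tau Htau.
Definition BB := BBL M dd Hdd.
Definition hh (a : AA) : BB := mkB M dd Hdd (proj1_sig a).
Definition ff (x : M) : prodBL AA BB := (mkA M tau Htau x, mkB M dd Hdd x).

Lemma AA_lin : linearly_ordered AA.
Proof.
  intros [x Hx] [y Hy]. unfold ble.
  destruct (chainT M tau Htau HSI x y) as [L|L]; rewrite Hx, Hy in L; [left|right];
    apply sig_ext; exact L.
Qed.

Lemma hh_hom : is_BLhom AA BB hh.
Proof.
  split; [|split; [|split; [|split; [|split]]]]; intros; unfold hh; simpl.
  - apply mkB_meet.
  - apply mkB_join.
  - apply mkB_prod.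
  - apply mkB_imp.
  - apply mkB_zero.
  - apply mkB_one.
Qed.

Lemma dd_le_imp x y : mkB M dd Hdd x = mkB M dd Hdd y -> ble dd (bimp x y).
Proof.
  intro E. assert (E2 := mkB_imp M dd Hdd x y). rewrite E in E2.
  apply (f_equal (@proj1_sig _ _)) in E2. simpl in E2.
  rewrite imp_refl, (meet_comm _ bone dd), meet_one in E2. rewrite <- E2. apply meet_le_l.
Qed.

Lemma hh_inj a b : hh a = hh b -> a = b.
Proof.
  destruct a as [x Hx], b as [y Hy]. unfold hh; simpl. intro E. apply sig_ext; simpl.
  assert (D := disj_SI M tau Htau HSI).
  assert (K : forall u v, tau u = u -> tau v = v ->
      mkB M dd Hdd u = mkB M dd Hdd v -> ble u v).
  { intros u v Hu Hv Euv. apply imp_one_iff.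
    destruct (D e (bimp u v) Hte (ex_intro _ (bimp u v) (eq_sym (eq_trans (t_imp M tau Htau u v)
       (f_equal2 bimp Hu Hv))))) as [H|H]; auto.
    - apply one_le. rewrite <- de1. apply join_lub.
      + eapply le_trans; [apply (dd_le_imp _ _ Euv)| apply join_le_r].
      + apply join_le_l.
    - contradiction. }
  apply le_antisym; apply K; auto.
Qed.

Lemma mkA_meet x y : mkA M tau Htau (bmeet x y) = bmeet (mkA M tau Htau x) (mkA M tau Htau y).
Proof. apply sig_ext. simpl. apply (t_meet M tau Htau). Qed.
Lemma mkA_join x y : mkA M tau Htau (bjoin x y) = bjoin (mkA M tau Htau x) (mkA M tau Htau y).
Proof. apply sig_ext. simpl. apply (t_join M tau Htau). Qed.
Lemma mkA_prod x y : mkA M tau Htau (bprod x y) = bprod (mkA M tau Htau x) (mkA M tau Htau y).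
Proof. apply sig_ext. simpl. apply (t_prod M tau Htau). Qed.
Lemma mkA_imp x y : mkA M tau Htau (bimp x y) = bimp (mkA M tau Htau x) (mkA M tau Htau y).
Proof. apply sig_ext. simpl. apply (t_imp M tau Htau). Qed.
Lemma mkA_zero : mkA M tau Htau bzero = bzero.
Proof. apply sig_ext. simpl. apply (t_zero M tau Htau). Qed.
Lemma mkA_one : mkA M tau Htau bone = bone.
Proof. apply sig_ext. simpl. apply (t_one M tau Htau). Qed.

Lemma ff_hom : is_BLhom M (prodBL AA BB) ff.
Proof.
  split; [|split; [|split; [|split; [|split]]]]; intros; unfold ff.
  - transitivity (bmeet (mkA M tau Htau a) (mkA M tau Htau b), bmeet (mkB M dd Hdd a) (mkB M dd Hdd b));
      [|reflexivity]. f_equal. apply mkA_meet. apply mkB_meet.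
  - transitivity (bjoin (mkA M tau Htau a) (mkA M tau Htau b), bjoin (mkB M dd Hdd a) (mkB M dd Hdd b));
      [|reflexivity]. f_equal. apply mkA_join. apply mkB_join.
  - transitivity (bprod (mkA M tau Htau a) (mkA M tau Htau b), bprod (mkB M dd Hdd a) (mkB M dd Hdd b));
      [|reflexivity]. f_equal. apply mkA_prod. apply mkB_prod.
  - transitivity (bimp (mkA M tau Htau a) (mkA M tau Htau b), bimp (mkB M dd Hdd a) (mkB M dd Hdd b));
      [|reflexivity]. f_equal. apply mkA_imp. apply mkB_imp.
  - transitivity ((bzero : AA), (bzero : BB)); [|reflexivity]. f_equal. apply mkA_zero. apply mkB_zero.
  - transitivity ((bone : AA), (bone : BB)); [|reflexivity]. f_equal. apply mkA_one. apply mkB_one.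
Qed.

Lemma ff_inj x y : ff x = ff y -> x = y.
Proof.
  unfold ff. intro E. apply pair_eq_iff in E as [E1 E2].
  apply (f_equal (@proj1_sig _ _)) in E1. simpl in E1.
  assert (K : forall u v, tau u = tau v -> mkB M dd Hdd u = mkB M dd Hdd v -> ble u v).
  { intros u v T1 T2. apply imp_one_iff. apply KerUpD.
    - unfold Ker. rewrite (t_imp M tau Htau), T1. apply imp_refl.
    - now apply dd_le_imp. }
  apply le_antisym; apply K; auto.
Qed.

Lemma ff_surj p : exists x, ff x = p.
Proof.
  destruct p as [[a Ha] [b Hb]]. exists (bjoin (bmeet a e) b). unfold ff. f_equal; apply sig_ext; simpl.
  - rewrite (t_join M tau Htau), (t_meet M tau Htau), Ha, Hte, meet_one.
    assert (T : tau b = bzero).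
    { apply le_zero_eq. rewrite <- tdd. now apply (t_mono M tau Htau). }
    rewrite T. apply join_zero.
  - rewrite (comp_join_distr M _ _ dd Hdd). rewrite <- meet_assoc, ed0, meet_zero.
    rewrite join_comm, join_zero. exact Hb.
Qed.

Lemma ff_comm x : ff (tau x) = tau_h AA BB hh (ff x).
Proof.
  unfold ff, tau_h, hh. simpl. f_equal. apply sig_ext. simpl. apply (t_idem M tau Htau).
Qed.

Lemma mkB_je (b : BB) : mkB M dd Hdd (bjoin (proj1_sig b) e) = b.
Proof.
  apply sig_ext. simpl. rewrite (comp_join_distr M _ _ dd Hdd), ed0, join_zero.
  apply (proj2_sig b).
Qed.

Lemma BB_SI : SI_BL BB.
Proof.
  destruct HF0 as [[[F0ne [F0p F0u]] F0t] [[g [Hg gn1]] Hl]].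
  assert (F01 : F0 bone) by (apply (filter_one M); split; auto).
  exists (fun b : BB => F0 (bjoin (proj1_sig b) e)). split; [|split].
  - split; [|split].
    + exists (bone : BB). simpl. rewrite de1. exact F01.
    + intros a b Ha Hb. simpl. apply (F0u (bprod (bjoin (proj1_sig a) e) (bjoin (proj1_sig b) e))).
      * now apply F0p.
      * rewrite !(join_comm _ _ e). apply join_prod_le.
    + intros a b Ha Hab. apply (f_equal (@proj1_sig _ _)) in Hab. simpl in Hab.
      apply (F0u _ _ Ha). apply join_mono. exact Hab. apply le_refl.
  - exists (mkB M dd Hdd g). split.
    + simpl. apply (F0u g); auto.
      rewrite <- (prod_one _ g) at 1. rewrite <- de1, prod_join.
      apply join_mono. rewrite (comp_meet_prod M g dd Hdd). apply le_refl. apply prod_le_r.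
    + intro E. apply (f_equal (@proj1_sig _ _)) in E. simpl in E. apply gn1.
      apply KerUpD. now apply F0K. rewrite <- E. apply meet_le_l.
  - intros G HG [b0 [Gb0 b0n]] b Hb.
    set (G' := fun x => Ker M tau x /\ G (mkB M dd Hdd x)).
    assert (GT : G (bone : BB)) by (now apply (filter_one BB)).
    destruct HG as [HGne [HGp HGu]].
    assert (TF : is_tau_filter M tau G').
    { split; [split; [|split]|].
      - exists bone. split. apply (t_one M tau Htau). now rewrite mkB_one.
      - intros x y [Kx Gx] [Ky Gy]. split.
        + unfold Ker in *. now rewrite (t_prod M tau Htau), Kx, Ky, prod_one.
        + rewrite mkB_prod. now apply HGp.
      - intros x y [Kx Gx] Hxy. split. now apply (Ker_le M tau Htau x).
        apply (HGu _ _ Gx). unfold ble, BB. rewrite <- mkB_meet. now rewrite Hxy.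
      - intros x [Kx Gx]. split. unfold Ker in *. now rewrite (t_idem M tau Htau).
        rewrite Kx, mkB_one. exact GT. }
    assert (NT : nontrivial_set M G').
    { exists (bjoin (proj1_sig b0) e). split; [split|].
      - apply (Ker_le M tau Htau e). exact Hte. apply join_le_r.
      - now rewrite mkB_je.
      - intro E. apply b0n. rewrite <- (mkB_je b0), E. apply mkB_one. }
    destruct (Hl G' TF NT _ Hb) as [_ Gb]. now rewrite mkB_je in Gb.
Qed.

End Iii.

Lemma iii_forward (M : BL) (tau : M -> M) (Htau : is_state_morphism M tau)
  (HSI : SI_SM M tau) (Hnf : ~ faithful M tau) (Hb : has_nontrivial_boolean M) :
  exists (A B : BL) (h : A -> B),
        linearly_ordered A /\ SI_BL B /\ is_BLhom A B h /\
        (forall x y, h x = h y -> x = y) /\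
        exists f : M -> prodBL A B,
          is_BLhom M (prodBL A B) f /\
          (forall x y, f x = f y -> x = y) /\
          (forall p, exists x, f x = p) /\
          (forall x, f (tau x) = tau_h A B h (f x)).
Proof.
  destruct Hb as [e0 [Hb0 [n0 n1]]].
  assert (C0 := comp_of_bool M e0 Hb0).
  assert (X : exists e, exists He : bjoin e (bneg e) = bone, tau e = bone /\ e <> bone).
  { assert (T : bjoin (tau e0) (tau (bneg e0)) = bone)
      by (now rewrite <- (t_join M tau Htau), C0, (t_one M tau Htau)).
    destruct (chainT_join M tau Htau HSI _ _ T) as [T1|T1].
    - exists e0, C0. auto.
    - exists (bneg e0), (comp_neg M e0 C0). split; auto.
      intro E. apply n0. apply le_zero_eq. apply imp_one_iff. exact E. }
  destruct X as [e [He [Hte He1]]].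
  destruct HSI as [F0 HF0] eqn:EHSI.
  exists (AA M tau Htau), (BB M e He), (hh M tau Htau e He).
  split; [apply AA_lin; auto|].
  split; [eapply BB_SI; eauto|].
  split; [apply hh_hom|].
  split; [eapply hh_inj; eauto|].
  exists (ff M tau Htau e He).
  split; [apply ff_hom|].
  split; [eapply ff_inj; eauto|].
  split; [eapply ff_surj; eauto|].
  apply ff_comm.
Qed.

Theorem theorem2p7 (M : BL) (tau : M -> M) (Htau : is_state_morphism M tau) :
  (SI_SM M tau <->
     (* (i) *)
     (linearly_ordered M /\ is_identity M tau /\ SI_BL M)
     (* (ii) *)
  \/ (~ faithful M tau /\ no_nontrivial_boolean M /\ is_local M /\
      Ker_SI M tau /\ disjunction_property M tau)
     (* (iii) *)
  \/ (~ faithful M tau /\ has_nontrivial_boolean M /\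
      exists (A B : BL) (h : A -> B),
        linearly_ordered A /\ SI_BL B /\ is_BLhom A B h /\
        (forall x y, h x = h y -> x = y) /\
        exists f : M -> prodBL A B,
          is_BLhom M (prodBL A B) f /\
          (forall x y, f x = f y -> x = y) /\
          (forall p, exists x, f x = p) /\
          (forall x, f (tau x) = tau_h A B h (f x))))
  /\
  (* "Moreover" part of (ii) *)
  ((~ faithful M tau /\ no_nontrivial_boolean M /\ is_local M /\
    Ker_SI M tau /\ disjunction_property M tau) ->
     (linearly_ordered M <-> Rad1_linearly_ordered M) /\
     (linearly_ordered M ->
        SI_BL M /\
        exists F, least_nontrivial_tau_filter M tau F /\
                  least_nontrivial_filter M F) /\
     ((forall x, Rad1 M x <-> Ker M tau x) -> linearly_ordered M)).
Proof.
  split.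
  - split.
    + intro HSI. destruct (classic (faithful M tau)) as [Hf|Hnf].
      * left.
        assert (Hid : is_identity M tau).
        { intro x. apply le_antisym.
          - apply imp_one_iff. apply Hf. unfold Ker.
            rewrite (t_imp M tau Htau), (t_idem M tau Htau). apply imp_refl.
          - apply imp_one_iff. apply Hf. unfold Ker.
            rewrite (t_imp M tau Htau), (t_idem M tau Htau). apply imp_refl. }
        split; [|split]; auto.
        -- intros x y. rewrite <- (Hid x), <- (Hid y). apply (chainT M tau Htau HSI).
        -- destruct HSI as [F [[HF HFt] [Hnt Hl]]]. exists F. split; [|split]; auto.
           intros G HG HGn. apply Hl; auto. split; auto. intros x Hx. now rewrite Hid.
      * right. destruct (classic (has_nontrivial_boolean M)) as [Hb|Hnb].
        -- right. split; auto. split; auto. now apply iii_forward.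
        -- left.
           assert (NB : no_nontrivial_boolean M).
           { intros a Ha. apply NNPP; intro H. apply not_or_and in H as [H1 H2].
             apply Hnb. exists a. auto. }
           split; auto. split; auto. split; [now apply (local_NB M tau)|].
           split; [now apply (KerSI M tau)|]. now apply (disj_SI M tau).
    + intros [H|[H|H]].
      * destruct H as [_ [Hid HSB]]. now apply i_SI.
      * destruct H as [_ [_ [_ [HK HD]]]]. now apply ii_SI.
      * destruct H as [_ [_ [A [B [h [_ [SIB [Hh [hinj [f [Hf [finj [fsurj fc]]]]]]]]]]]]].
        exact (iii_SI M tau A B h Hh hinj SIB f Hf finj fsurj fc).
  - intros [Hnf [Hnb [Hloc [HK HD]]]].
    assert (HSI : SI_SM M tau) by (now apply ii_SI).
    split; [|split].
    + split.
      * intros Hl x y _ _. apply Hl.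
      * intros HR. apply (lin_crit M tau Htau HSI Hnf Hnb).
        intros a b Ka Fb. apply HR.
        -- apply (Rad1_iff M tau Htau HSI Hnf Hnb). now apply Ker_Ftau.
        -- now apply (Rad1_iff M tau Htau HSI Hnf Hnb).
    + intro Hlin.
      destruct HSI as [F0 HF0] eqn:EH.
      assert (F0K := F0_Ker M tau Htau Hnf F0 HF0).
      assert (LF : least_nontrivial_filter M F0).
      { destruct HF0 as [[HF HFt] [[g [Hg gn1]] Hl]].
        split; [|split]; auto. exists g; auto.
        intros G HG [x [Hx xn1]].
        assert (GKf : is_tau_filter M tau (fun z => G z /\ Ker M tau z)).
        { destruct HG as [HGne [HGp HGu]]. split; [split; [|split]|].
          - exists bone. split. apply (filter_one M); split; auto. apply (t_one M tau Htau).
          - intros a b [Ga Ka] [Gb Kb]. split; auto. unfold Ker in *.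
            now rewrite (t_prod M tau Htau), Ka, Kb, prod_one.
          - intros a b [Ga Ka] Lab. split. eauto. now apply (Ker_le M tau Htau a).
          - intros a [Ga Ka]. rewrite Ka. split. apply (filter_one M); split; auto.
            apply (t_one M tau Htau). }
        assert (GKn : nontrivial_set M (fun z => G z /\ Ker M tau z)).
        { destruct HG as [HGne [HGp HGu]]. destruct (Hlin x g) as [L|L].
          - exists g. split; auto. split; [apply (HGu x); auto|apply F0K; auto].
          - exists x. split; auto. split; auto. apply (Ker_le M tau Htau g); auto. }
        intros z Hz. apply (Hl _ GKf GKn z Hz). }
      split. exists F0; auto. exists F0; auto.
    + intros HRK. apply (lin_crit M tau Htau HSI Hnf Hnb).
      intros a b Ka Fb. apply (Ker_lin M tau Htau HSI); auto.
      apply (proj1 (HRK b)). apply (proj2 (Rad1_iff M tau Htau HSI Hnf Hnb b)). exact Fb.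
Qed.
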